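(* Let $T$ be a rooted binary tree with black/white-coloured leaves and the induced node colouring and classification as described in the context, and suppose $T$ contains more than one maximal black subtree. Then no SPR operation on $T$ belonging to the class $(\mathrm{B},\mathrm{b},\mathrm{W},\ast)$, $(\mathrm{B},\mathrm{b},\mathrm{B},\ast)$ or $(\mathrm{B},\mathrm{b},\mathrm{G},\ast)$ produces a compatible tree.
   Context: All trees are rooted binary trees; every non-leaf node has exactly two children and every non-root node $n$ has a parent $\mathrm{pa}(n)$. A ''subtree'' always means a node together with all of its descendants. Colouring: each leaf is coloured black (B) or white (W); an internal node is black if both children are black, white if both children are white, and grey (G) otherwise. A subtree is black (resp. white) if all its nodes are black (resp. white); it is maximal if no strictly larger subtree containing it is black (resp. white). Classification: a black or white node is of type ''r'' if it is the root of a maximal subtree of its own colour, and of type ''b'' otherwise; all grey nodes are of type ''b'' by convention. A tree is compatible if it contains at most one maximal black subtree. SPR operation $(u,v)$ on $T$: $u$ is a non-root node, $v$ is a node with $v\notin\{u,\mathrm{pa}(u)\}$ and $v$ not a descendant of $u$; the subtree rooted at $u$ is pruned (the edge to $u$ is removed and $\mathrm{pa}(u)$ deleted, its other child taking its place), then regrafted by inserting a new node on the edge from $v$ to its parent (or as a new root above $v$ if $v$ is the root) whose two children are $v$ and $u$; colours of the resulting tree are recomputed by the same rule. The operation belongs to class $(x,y,z,w)$ where $x,z\in\{\mathrm{B},\mathrm{W},\mathrm{G}\}$ are the colours in $T$ of $u$ and $v$, and $y,w\in\{\mathrm{r},\mathrm{b}\}$ their classifications in $T$; $\ast$ denotes any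 value. *)

(* Defs.v *)
From mathcomp Require Import all_boot.
Set Implicit Arguments. Unset Strict Implicit. Unset Printing Implicit Defensive.

(* Rooted binary trees with coloured leaves: Lf true = black leaf,
   Lf false = white leaf.  Nodes are addressed by paths from the root:
   a seq bool, false = left child, true = right child. *)
Inductive tree := Lf (black : bool) | Nd (l r : tree).

Inductive colour := Black | White | Grey.

Fixpoint colour_of (t : tree) : colour :=
  match t with
  | Lf true => Black
  | Lf false => White
  | Nd l r =>
      match colour_of l, colour_of r with
      | Black, Black => Black
      | White, White => White
      | _, _ => Grey
      end
  end.

Fixpoint subt (t : tree) (p : seq bool) : option tree :=
  match p with
  | [::] => Some t
  | b :: p' => match t with
               | Lf _ => None
               | Nd l r => subt (if b then r else l) p'
               end
  end.

(* replace the subtree at address p by s (no-op if p is not a node) *)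
Fixpoint repl (t : tree) (p : seq bool) (s : tree) : tree :=
  match p with
  | [::] => s
  | b :: p' => match t with
               | Lf c => Lf c
               | Nd l r => if b then Nd l (repl r p' s) else Nd (repl l p' s) r
               end
  end.

Definition node_colour (t : tree) (p : seq bool) (c : colour) : Prop :=
  exists s, subt t p = Some s /\ colour_of s = c.

Definition all_col (c : colour) (s : tree) : Prop :=
  forall q s', subt s q = Some s' -> colour_of s' = c.

Definition is_max (c : colour) (t : tree) (p : seq bool) : Prop :=
  exists s, subt t p = Some s /\ all_col c s /\
    forall q s', prefix q p -> q != p -> subt t q = Some s' -> ~ all_col c s'.

(* classification: type "r" (black/white node rooting a maximal subtree of
   its own colour); type "b" is the negation (grey nodes are type "b") *)
Definition type_r (t : tree) (p : seq bool) : Prop :=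
  exists s, subt t p = Some s /\
    match colour_of s with
    | Black => is_max Black t p
    | White => is_max White t p
    | Grey => False
    end.

Definition type_b (t : tree) (p : seq bool) : Prop :=
  subt t p <> None /\ ~ type_r t p.

Definition compatible (t : tree) : Prop :=
  forall p q, is_max Black t p -> is_max Black t q -> p = q.

Definition more_than_one_max_black (t : tree) : Prop :=
  exists p q, p <> q /\ is_max Black t p /\ is_max Black t q.

Definition pa (u : seq bool) : seq bool := take (size u).-1 u.

Definition spr_valid (t : tree) (u v : seq bool) : Prop :=
  u <> [::] /\ subt t u <> None /\ subt t v <> None /\
  v <> u /\ v <> pa u /\ ~ prefix u v.

(* the SPR operation (u, v): prune the subtree at u (pa u is replaced by the
   sibling of u), then regraft it on the edge above (the image of) v, via a
   new node with children v and u (a new root if v is the root). *)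
Definition spr (t : tree) (u v : seq bool) : tree :=
  let pu := pa u in
  let b := last false u in
  let sib := rcons pu (~~ b) in
  let su := odflt t (subt t u) in
  let t1 := repl t pu (odflt t (subt t sib)) in
  let v' := if prefix sib v then pu ++ drop (size u) v else v in
  repl t1 v' (Nd (odflt t1 (subt t1 v')) su).

(* Main.v *)
Require Import Defs.
From mathcomp Require Import all_boot.
From mathcomp Require Import zify.
Set Implicit Arguments. Unset Strict Implicit.

Fixpoint allb (t : tree) : bool :=
  match t with Lf b => b | Nd l r => allb l && allb r end.

Fixpoint nmax (t : tree) : nat :=
  if allb t then 1 else
  match t with Lf _ => 0 | Nd l r => nmax l + nmax r end.

Lemma nmax_allb t : allb t -> nmax t = 1.
Proof. by case: t => [b|l r] /= ->. Qed.

Lemma colour_allb s : (colour_of s = Black) <-> allb s.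
Proof.
elim: s => [[]|l IHl r IHr] //=; split => //.
  case El: (colour_of l); case Er: (colour_of r) => //= _.
  by rewrite (proj1 IHl El) (proj1 IHr Er).
by case/andP => /IHl -> /IHr ->.
Qed.

Lemma allb_subt w q s' : allb w -> subt w q = Some s' -> allb s'.
Proof.
elim: q w => [|b q IH] [c|l r] /=; try by move=> ? [<-].
  by [].
by case/andP => Hl Hr; case: b; apply: IH.
Qed.

Lemma subt_nil t : subt t [::] = Some t. Proof. by case: t. Qed.
Lemma repl_nil t s : repl t [::] s = s. Proof. by case: t. Qed.
Lemma subt_cons l r b p : subt (Nd l r) (b :: p) = subt (if b then r else l) p.
Proof. by []. Qed.

Lemma all_col_allb s : all_col Black s <-> allb s.
Proof.
split.
  move=> H; apply: (proj1 (colour_allb s)); apply: (H [::]); exact: subt_nil.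
by move=> H q s' Hs; apply: (proj2 (colour_allb s')); exact: allb_subt H Hs.
Qed.

Lemma subt_cat t p q : subt t (p ++ q) =
  match subt t p with Some w => subt w q | None => None end.
Proof. by elim: p t => [|b p IH] [c|l r] //=. Qed.

Lemma prefix_rcons_neq (q s : seq bool) x :
  prefix q (rcons s x) -> q != rcons s x -> prefix q s.
Proof.
elim: s q => [|y s IH] [|z q] //=.
  by case/andP=> /eqP ->; case: q => //= _; rewrite eqxx.
case/andP => /eqP -> H; rewrite eqseq_cons eqxx /= => Hn.
by apply: IH.
Qed.

Lemma nmax_ge1 t p s : subt t p = Some s -> allb s -> 1 <= nmax t.
Proof.
elim: t p => [c|l IHl r IHr] [|b p] //=.
- by move=> [<-]; case: c.
- by move=> [<-] /= ->.
- move=> H Hs; case: ifP => // _; case: b H => H.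
    by have := IHr _ H Hs; lia.
  by have := IHl _ H Hs; lia.
Qed.

Lemma is_max_child l r b p :
  is_max Black (Nd l r) (b :: p) -> is_max Black (if b then r else l) p.
Proof.
case=> s [Hs [Ha Hm]]; exists s; split => //; split => // q s' Hq Hn Hq'.
apply: (Hm (b :: q)) => //=; first by rewrite eqxx.
by rewrite eqseq_cons eqxx.
Qed.

Lemma is_max_lift l r b p :
  ~~ allb (Nd l r) -> is_max Black (if b then r else l) p ->
  is_max Black (Nd l r) (b :: p).
Proof.
move=> Hn [s [Hs [Ha Hm]]]; exists s; split => //; split => // [[|c q]] s' Hq Hne /=.
  by move=> [<-] /all_col_allb H; rewrite H in Hn.
move: Hq; rewrite /= => /andP [/eqP Ec Hq]; subst c.
apply: Hm => //; by move: Hne; rewrite eqseq_cons eqxx.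
Qed.

Lemma two_max t p q : p <> q -> is_max Black t p -> is_max Black t q ->
  2 <= nmax t.
Proof.
elim: t p q => [c|l IHl r IHr] p q Hpq Hp Hq.
  exfalso; apply: Hpq.
  by case: p Hp => [|b p] [s [Hs _]] //; case: q Hq => [|b' q] [s' [Hs' _]].
have Hna : ~~ allb (Nd l r).
  apply/negP => Hab.
  have Hroot : forall p, p <> [::] -> is_max Black (Nd l r) p -> False.
    move=> p' Hp' [s [_ [_ Hm]]]; apply: (Hm [::] (Nd l r)).
    - exact: prefix0s.
    - by apply/eqP => E; apply: Hp'; rewrite -E.
    - by [].
    - exact/all_col_allb.
  case: (p =P [::]) => [E|E]; last exact: (Hroot p E Hp).
  by apply: (Hroot q) => // Eq; apply: Hpq; rewrite E Eq.
have Hne : forall p, is_max Black (Nd l r) p -> p <> [::].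
  move=> p' [s [Hs [Ha _]]] E; subst p'; move: Hs => [E']; subst s.
  by move/all_col_allb: Ha; rewrite (negbTE Hna).
have Hna' : allb l && allb r = false by apply/negbTE.
rewrite /= Hna'.
case: p Hp Hpq (Hne _ Hp) => [|b p] Hp Hpq // _.
case: q Hq Hpq (Hne _ Hq) => [|c q] Hq Hpq // _.
have Hp1 := is_max_child Hp; have Hq1 := is_max_child Hq.
have G1 : forall t' p', is_max Black t' p' -> 1 <= nmax t'.
  move=> t' p' [s [Hs [Ha _]]]; apply: (nmax_ge1 Hs); exact/all_col_allb.
clear Hp Hq.
case: b c Hp1 Hq1 Hpq => [] [] Hp1 Hq1 Hpq.
- have : p <> q by move=> E; apply: Hpq; rewrite E.
  move/(IHr _ _)/(_ Hp1 Hq1); lia.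
- by have := G1 _ _ Hp1; have := G1 _ _ Hq1; lia.
- by have := G1 _ _ Hp1; have := G1 _ _ Hq1; lia.
- have : p <> q by move=> E; apply: Hpq; rewrite E.
  move/(IHl _ _)/(_ Hp1 Hq1); lia.
Qed.

Lemma one_max t : 1 <= nmax t -> exists p, is_max Black t p.
Proof.
elim: t => [c|l IHl r IHr] /=.
  case: c => // _; exists [::]; exists (Lf true); split => //; split.
    exact/all_col_allb.
  by move=> [|b q] s' //= _; rewrite eqxx.
case: ifP => Hab H.
  exists [::]; exists (Nd l r); split => //; split; first exact/all_col_allb.
  by move=> [|b q] s' //= _; rewrite eqxx.
have Hn : ~~ allb (Nd l r) by rewrite /= Hab.
case El: (nmax l) H => [|k] H.
  have [p Hp] := IHr H; exists (true :: p); exact: (is_max_lift (b:=true)).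
have [p Hp] := IHl (ltac:(by rewrite El)); exists (false :: p); exact: (is_max_lift (b:=false)).
Qed.

Lemma two_not_compat t : 2 <= nmax t -> ~ compatible t.
Proof.
move=> H Hc.
suff [p [q [Hpq [Hp Hq]]]] : exists p q, p <> q /\ is_max Black t p /\ is_max Black t q.
  by apply: Hpq; apply: Hc.
elim: t H {Hc} => [[]|l IHl r IHr] //=.
case: ifP => // Hab H.
have Hn : ~~ allb (Nd l r) by rewrite /= Hab.
case: (leqP 2 (nmax l)) => Hl.
  have [p [q [Hpq [Hp Hq]]]] := IHl Hl.
  exists (false :: p), (false :: q); split; first by case.
  by split; apply: (is_max_lift (b:=false)).
case: (leqP 2 (nmax r)) => Hr.
  have [p [q [Hpq [Hp Hq]]]] := IHr Hr.
  exists (true :: p), (true :: q); split; first by case.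
  by split; apply: (is_max_lift (b:=true)).
have [p Hp] : exists p, is_max Black l p.
  by apply: one_max; lia.
have [q Hq] : exists q, is_max Black r q.
  by apply: one_max; lia.
exists (false :: p), (true :: q); split => //.
by split; [apply: (is_max_lift (b:=false))|apply: (is_max_lift (b:=true))].
Qed.

Lemma nmax_Nd l r : nmax (Nd l r) = if allb l && allb r then 1 else nmax l + nmax r.
Proof. by []. Qed.

Lemma node_mono l r l' r' :
  ((allb l' -> allb l) /\ nmax l <= nmax l') ->
  ((allb r' -> allb r) /\ nmax r <= nmax r') ->
  (allb (Nd l' r') -> allb (Nd l r)) /\ nmax (Nd l r) <= nmax (Nd l' r').
Proof.
move=> [H1 H2] [H3 H4]; split; first by rewrite /=; case/andP => /H1 -> /H3 ->.
rewrite !nmax_Nd.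
case El: (allb l); case Er: (allb r); case El': (allb l'); case Er': (allb r') => /=;
  try (have := nmax_allb El); try (have := nmax_allb Er);
  try (have := nmax_allb El'); try (have := nmax_allb Er'); try lia;
  try (by move: (H1 is_true_true); rewrite El);
  try (by move: (H3 is_true_true); rewrite Er);
  try (by have := H1 El'; rewrite El);
  try (by have := H3 Er'; rewrite Er).
Qed.

Lemma repl_mono t p x' :
  (forall s, subt t p = Some s -> (allb x' -> allb s) /\ nmax s <= nmax x') ->
  (allb (repl t p x') -> allb t) /\ nmax t <= nmax (repl t p x').
Proof.
elim: p t => [|b p IH] t; first by rewrite repl_nil => /(_ t (subt_nil t)).
case: t => [c|l r] //= H.
case: b H => H /=.
- by apply: node_mono => //; apply: IH.
- by apply: node_mono => //; apply: IH.
Qed.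

Lemma nmax_Nd_ge s su : nmax s <= nmax (Nd s su).
Proof.
rewrite nmax_Nd; case Es: (allb s) => /=; last lia.
by rewrite (nmax_allb Es); case: ifP => _; lia.
Qed.

Theorem lemma2 (t : tree) (u v : seq bool) :
  more_than_one_max_black t ->
  spr_valid t u v ->
  (* class (B, b, z, * ) with z in {W, B, G} *)
  node_colour t u Black -> type_b t u ->
  (node_colour t v White \/ node_colour t v Black \/ node_colour t v Grey) ->
  ~ compatible (spr t u v).
Proof.
move=> [p [q [Hpq [Hp Hq]]]] [Hu0 _] [su [Hsu Hcol]] [_ Hnr] _.
have H2 := two_max Hpq Hp Hq.
have Hasu : allb su := proj1 (colour_allb su) Hcol.
have [s [x Eu]] : exists s x, u = rcons s x.
  by case/lastP: u Hu0 {Hsu Hnr} => [//|s x] _; exists s, x.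
subst u.
have Hpa : pa (rcons s x) = s by rewrite /pa size_rcons -cats1 take_size_cat.
have Hlast : last false (rcons s x) = x by rewrite last_rcons.
move: (Hsu); rewrite -cats1 subt_cat.
case Hw: (subt t s) => [w|] // Hwx.
have Haw : allb w.
  apply/negP => Hnw; apply: Hnr; exists su; split => //; rewrite Hcol.
  exists su; split => //; split; first exact/all_col_allb.
  move=> q' s' Hq' Hne Hs' /all_col_allb Ha'.
  have /prefixP [r' Er'] := prefix_rcons_neq Hq' Hne.
  move: Hw; rewrite Er' subt_cat Hs' => Hw'.
  by apply: Hnw; exact: allb_subt Ha' Hw'.
case: w Hw Hwx Haw => [c|l r] Hw //= Hwx Haw.
set ch := if ~~ x then r else l.
have Hsib : subt t (rcons s (~~ x)) = Some ch.
  by rewrite -cats1 subt_cat Hw /= subt_nil.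
have Hach : allb ch by rewrite /ch; case/andP: Haw; by case: (x) => /=; move=> ? ?.
rewrite /spr cats1 Hpa Hlast Hsib Hsu /=.
set t1 := repl t s ch.
have H1 : nmax t <= nmax t1.
  apply: (proj2 (repl_mono _)) => s0; rewrite Hw => [[<-]].
  by rewrite (nmax_allb (t:=Nd l r) Haw) (nmax_allb Hach).
set v' := if prefix _ v then _ else _.
apply: two_not_compat.
apply: (leq_trans H2); apply: (leq_trans H1).
apply: (proj2 (repl_mono _)) => s0 Hs0; rewrite Hs0 /=.
by split; [case/andP|apply: nmax_Nd_ge].
Qed.
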